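(* Let $(\mathcal{B},d)$ be a dg-coalgebra over a field $k$ with counit, and let $M$ be a graded $k$-vector space. Let $d_M$ be a differential on the free (cofree) $\mathcal{B}$-comodule $\mathcal{B}\otimes M$ making it a dg-comodule over $\mathcal{B}$, and let $\overline{d}_M:\mathcal{B}\otimes M\to M$ be its component (so $d_M(b\otimes m)=(\mathrm{id}\otimes\overline{d}_M)(\Delta(b)\otimes m)+db\otimes m$). Consider $\operatorname{Hom}_{gr}(\mathcal{B},M)$ as a right module over the dual graded algebra $\mathcal{B}^*$ via $\phi\cdot b^*=(\phi\otimes b^* )\circ\Delta$. Then the map $$d_M^{\vee}(\phi)(b)=\sum_i(-1)^{\deg b_i\deg\phi}\,\overline{d}_M(b_i\otimes\phi(b_i'))-(-1)^{\deg\phi}\phi(db),\qquad \Delta(b)=\sum_ib_i\otimes b_i',$$ is a differential of degree $1$ making $\operatorname{Hom}_{gr}(\mathcal{B},M)$ a right dg-module over the dg-algebra $(\mathcal{B}^*,d)$. Moreover, this construction extends to a dg-functor from the dg-category of dg-comodules over $\mathcal{B}$ that are free as $\mathcal{B}$-comodules to the dg-category of right dg-modules over $\mathcal{B}^*$, sending a comodule morphism $f:\mathcal{B}\otimes M\to\mathcal{B}\otimes M'$ with component $\overline{f}:\mathcal{B}\otimes M\to M'$ to $f^{\vee}(\phi)(b)=\sum_i(-1)^{\deg b_i\deg\phi}\overline{f}(b_i\otimes\phi(b_i'))$.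
   Context: For graded vector spaces $V,W$, $\operatorname{Hom}_{gr}(V,W)=\bigoplus_n\operatorname{Hom}(V,W)_n$ with $\operatorname{Hom}(V,W)_n=\prod_i\operatorname{Hom}(V_i,W_{i+n})$. The dual dg-algebra $\mathcal{B}^*$ has differential $(db^* )(b)=(-1)^{\deg b}b^*(db)$ and product $(b_1^*b_2^* )(b)=\sum_i(-1)^{\deg b_i\deg b_i'}b_1^*(b_i)b_2^*(b_i')$. In the dg-category of dg-comodules (resp. dg-modules), $\operatorname{Hom}^n$ consists of degree $n$ comodule (resp. module) maps, with differential $f\mapsto d\circ f-(-1)^{\deg f}f\circ d$ and composition of maps. *)

(* Defs.v *)
(* Graded vector spaces, dg-coalgebras, free dg-comodules
   and the dual dg-algebra, encoded without a tensor-product library: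
   elements of a graded tensor product are represented by finite lists of
   homogeneous pure tensors ("Sweedler lists"), and equality of tensors is
   equality under all (graded) bilinear maps, i.e. the universal property. *)
From HB Require Import structures.
From mathcomp Require Import all_boot all_order all_algebra.
Unset Printing Implicit Defensive.
Import Order.TTheory GRing.Theory Num.Theory.
Local Open Scope ring_scope.

Section Defs.
Context {k : fieldType}.

Definition sgn (z : int) : k := (-1) ^+ absz z.

Definition lin {U V : lmodType k} (f : U -> V) :=
  forall (a : k) (x y : U), f (a *: x + y) = a *: f x + f y.

(* A graded vector space is a family V : int -> lmodType k.
   gcast a b x : for x in V_a, the component of x in V_b (x if a = b, else 0) *)
Definition gcast {V : int -> lmodType k} {a : int} (b : int) : V a -> V b :=
  match a =P b with
  | ReflectT e => fun x => eq_rect a (fun i => (V i : Type)) x b e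
  | ReflectF _ => fun _ => 0
  end.

(* Representatives of elements of (A (x) C)_n = (+)_p A_p (x) C_{n-p} *)
Definition tens (A C : int -> lmodType k) (n : int) :=
  seq {p : int & (A p * C (n - p))%type}.

Definition tev {A C : int -> lmodType k} {W : lmodType k}
  (G : forall p q, A p -> C q -> W) {n : int} (t : tens A C n) : W :=
  \sum_(e <- t) G (tag e) (n - tag e) (tagged e).1 (tagged e).2.

Definition bilin {A C : int -> lmodType k} {W : lmodType k}
  (G : forall p q, A p -> C q -> W) :=
  forall p q, (forall y, lin (fun x => G p q x y)) /\ (forall x, lin (G p q x)).

Definition trilin {A A' C : int -> lmodType k} {W : lmodType k}
  (H : forall p q r, A p -> A' q -> C r -> W) :=
  forall p q r, [/\ forall y z, lin (fun x => H p q r x y z),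
                    forall x z, lin (fun y => H p q r x y z)
                  & forall x y, lin (H p q r x y)].

Definition teq {A C : int -> lmodType k} {n : int} (t1 t2 : tens A C n) :=
  forall (W : lmodType k) (G : forall p q, A p -> C q -> W),
    bilin G -> tev G t1 = tev G t2.

Definition tscale {A C : int -> lmodType k} (c : k) {n : int} (t : tens A C n)
  : tens A C n :=
  [seq existT (fun p => (A p * C (n - p))%type) (tag e)
       (c *: (tagged e).1, (tagged e).2) | e <- t].

Record dgcoalg (B : int -> lmodType k) := DGCoalg {
  cop : forall i, B i -> tens B B i;
  eps : forall i, B i -> k^o;
  dB  : forall i, B i -> B (i + 1) }.
Arguments cop {_} _ {_}.
Arguments eps {_} _ {_}.
Arguments dB {_} _ {_}.

Record is_dgcoalg {B : int -> lmodType k} (C : dgcoalg B) : Prop := {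
  dB_lin : forall i, lin (@dB B C i);
  dB_sq : forall i b, dB C (dB C b) = 0 :> B (i + 1 + 1);
  eps_lin : forall i, lin (@eps B C i);
  eps_deg : forall i, i != 0 -> forall b, @eps B C i b = 0;
  eps_dB : forall i b, eps C (@dB B C i b) = 0;
  cop_lin : forall (W : lmodType k) (G : forall p q, B p -> B q -> W),
      bilin G -> forall i, lin (fun b => tev G (@cop B C i b));
  coassoc : forall (W : lmodType k) (H : forall p q r, B p -> B q -> B r -> W),
      trilin H -> forall i (b : B i),
      tev (fun p q x y => tev (fun p' q' x1 x2 => H p' q' q x1 x2 y) (cop C x))
          (cop C b)
    = tev (fun p q x y => tev (fun p' q' y1 y2 => H p p' q' x y1 y2) (cop C y))
          (cop C b);
  counit_l : forall (W : lmodType k) (L : forall q, B q -> W),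
      (forall q, lin (L q)) -> forall i (b : B i),
      tev (fun p q x y => eps C x *: L q y) (cop C b) = L i b;
  counit_r : forall (W : lmodType k) (L : forall q, B q -> W),
      (forall q, lin (L q)) -> forall i (b : B i),
      tev (fun p q x y => eps C y *: L p x) (cop C b) = L i b;
  coder : forall (W : lmodType k) (G : forall p q, B p -> B q -> W),
      bilin G -> forall i (b : B i),
      tev G (cop C (dB C b))
    = tev (fun p q x y => G (p + 1) q (dB C x) y + sgn p *: G p (q + 1) x (dB C y))
          (cop C b) }.

(* ---------- maps between free comodules B (x) M -> B (x) M' ----------
   f p r s x m  represents the degree-s component of f(x (x) m). *)
Definition tmap (B M M' : int -> lmodType k) :=
  forall p r s, B p -> M r -> tens B M' s.

Definition text {B M M' : int -> lmodType k} (F : tmap B M M') {n : int}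
  (t : tens B M n) (s : int) : tens B M' s :=
  flatten [seq F (tag e) (n - tag e) s (tagged e).1 (tagged e).2 | e <- t].

(* g o f, for f of degree n *)
Definition tcomp {B M M' M'' : int -> lmodType k} (n : int)
  (g : tmap B M' M'') (f : tmap B M M') : tmap B M M'' :=
  fun p r s x m => text g (f p r (p + r + n) x m) s.

Definition tid {B M : int -> lmodType k} : tmap B M M :=
  fun p r s x m => [:: existT (fun a => (B a * M (s - a))%type) p (x, gcast (s - p) m)].

Definition tmlin {B M M' : int -> lmodType k} (c : k) (f g : tmap B M M')
  : tmap B M M' := fun p r s x m => tscale c (f p r s x m) ++ g p r s x m.

Record is_tmap {B M M' : int -> lmodType k} (n : int) (f : tmap B M M') : Prop := {
  tmap_bilin : forall (W : lmodType k) (G : forall p q, B p -> M' q -> W),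
      bilin G -> forall s, bilin (fun p r x m => tev G (f p r s x m));
  tmap_deg : forall p r s, s != p + r + n -> forall x m, teq (f p r s x m) [::] }.

(* f is a comodule map of degree n: (Delta (x) id) o f = (id (x) f) o (Delta (x) id),
   with the Koszul sign *)
Definition is_comodmap {B M M' : int -> lmodType k} (C : dgcoalg B) (n : int)
  (f : tmap B M M') :=
  forall (W : lmodType k) (H : forall p q r, B p -> B q -> M' r -> W), trilin H ->
  forall p r (x : B p) (m : M r),
    tev (fun q t y m' => tev (fun a c y1 y2 => H a c t y1 y2 m') (cop C y))
        (f p r (p + r + n) x m)
  = tev (fun a c x1 x2 => sgn (n * a) *:
           tev (fun q t y m' => H a q t x1 y m') (f c r (p + r + n - a) x2 m))
        (cop C x).

(* dM is a coderivation: (Delta (x) id) o dM = (d_B (x) id + id (x) dM) o (Delta (x) id) *)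
Definition is_coder {B M : int -> lmodType k} (C : dgcoalg B) (dM : tmap B M M) :=
  forall (W : lmodType k) (H : forall p q r, B p -> B q -> M r -> W), trilin H ->
  forall p r (x : B p) (m : M r),
    tev (fun q t y m' => tev (fun a c y1 y2 => H a c t y1 y2 m') (cop C y))
        (dM p r (p + r + 1) x m)
  = tev (fun a c x1 x2 => H (a + 1) c r (dB C x1) x2 m + sgn a *:
           tev (fun q t y m' => H a q t x1 y m') (dM c r (p + r + 1 - a) x2 m))
        (cop C x).

Record is_freedgcomod {B M : int -> lmodType k} (C : dgcoalg B) (dM : tmap B M M)
  : Prop := {
  dM_tmap : is_tmap 1 dM;
  dM_coder : is_coder C dM;
  dM_sq : forall p r s x m, teq (tcomp 1 dM dM p r s x m) [::] }.

Definition comp_ {B M M' : int -> lmodType k} (C : dgcoalg B) (f : tmap B M M')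
  : forall p r s, B p -> M r -> M' s :=
  fun p r s x m => tev (fun q t y m' => eps C y *: gcast s m') (f p r s x m).

(* ---------- Hom_gr(B, M) ----------
   A homogeneous element phi of degree n is given by phi i j : B_i -> M_j,
   zero unless j = i + n. *)
Definition ghom (V W : int -> lmodType k) := forall i j, V i -> W j.

Record is_ghom {V W : int -> lmodType k} (n : int) (phi : ghom V W) : Prop := {
  ghom_lin : forall i j, lin (phi i j);
  ghom_deg : forall i j, j != i + n -> forall x, phi i j x = 0 }.

Definition glin {V W : int -> lmodType k} (c : k) (phi psi : ghom V W) : ghom V W :=
  fun i j x => c *: phi i j x + psi i j x.

(* ---------- the dual dg-algebra B^# ----------
   a homogeneous element of degree m is a functional on B_{-m} *)
Definition dual (B : int -> lmodType k) := forall q, B q -> k^o.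

Record is_dhom {B : int -> lmodType k} (m : int) (bs : dual B) : Prop := {
  dhom_lin : forall q, lin (bs q);
  dhom_deg : forall q, q + m != 0 -> forall y, bs q y = 0 }.

Definition dlin {B : int -> lmodType k} (c : k) (b1 b2 : dual B) : dual B :=
  fun q y => c * b1 q y + b2 q y.

Definition ddual {B : int -> lmodType k} (C : dgcoalg B) (bs : dual B) : dual B :=
  fun q y => sgn q * bs (q + 1) (dB C y).

Definition dmul {B : int -> lmodType k} (C : dgcoalg B) (b1 b2 : dual B) : dual B :=
  fun q b => tev (fun p p' (x : B p) (y : B p') =>
                    (sgn (p * p') * (b1 p x * b2 p' y) : k^o)) (cop C b).

Definition act {B M : int -> lmodType k} (C : dgcoalg B) (m : int)
  (phi : ghom B M) (bs : dual B) : ghom B M :=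
  fun i j b => tev (fun p q x y => sgn (m * p) *: (bs q y *: phi p j x)) (cop C b).

Definition dvee {B M : int -> lmodType k} (C : dgcoalg B)
  (dbar : forall p r s, B p -> M r -> M s) (n : int) (phi : ghom B M) : ghom B M :=
  fun i j b =>
    tev (fun p q x y => sgn (p * n) *: dbar p (q + n) j x (phi q (q + n) y)) (cop C b)
    - sgn n *: phi (i + 1) j (dB C b).

Definition fvee {B M M' : int -> lmodType k} (C : dgcoalg B)
  (fbar : forall p r s, B p -> M r -> M' s) (n : int) (phi : ghom B M) : ghom B M' :=
  fun i j b =>
    tev (fun p q x y => sgn (p * n) *: fbar p (q + n) j x (phi q (q + n) y)) (cop C b).

Definition vee {B M M' : int -> lmodType k} (C : dgcoalg B) (f : tmap B M M') :=
  fvee C (comp_ C f).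

Definition tdiff {B M M' : int -> lmodType k} (n : int) (dM : tmap B M M)
  (dM' : tmap B M' M') (f : tmap B M M') : tmap B M M' :=
  fun p r s x m => tcomp n dM' f p r s x m ++ tscale (- sgn n) (tcomp 1 f dM p r s x m).

End Defs.

(* Main.v *)
Require Import Defs.
From HB Require Import structures.
From mathcomp Require Import all_boot all_order all_algebra.
From mathcomp Require Import ring zify.
Import Order.TTheory GRing.Theory Num.Theory.
Local Open Scope ring_scope.


Arguments eps {k B} d {i}.
Arguments cop {k B} d {i}.
Arguments dB {k B} d {i}.



Section L1.
Context {k : fieldType}.

Lemma sgnE (z : int) : sgn z = (-1 : k) ^ z.
Proof.
case: z => n; rewrite /sgn //=.
by rewrite /exprz /= -signr_odd; case: odd; rewrite ?invr1 ?invrN1 ?expr0 ?expr1.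
Qed.

Lemma sgnD a b : sgn (a + b) = sgn a * sgn b :> k.
Proof. by rewrite !sgnE expfzDr // oppr_eq0 oner_eq0. Qed.
Lemma sgnN a : sgn (- a) = sgn a :> k.
Proof. by rewrite /sgn abszN. Qed.
Lemma sgn0 : sgn 0 = 1 :> k. Proof. by []. Qed.
Lemma sgn1 : sgn 1 = -1 :> k. Proof. by rewrite /sgn /= expr1. Qed.
Lemma sgnK a : sgn a * sgn a = 1 :> k.
Proof. by rewrite /sgn -exprMn mulrNN mulr1 expr1n. Qed.
Lemma sgn2 w : sgn (2 * w) = 1 :> k.
Proof. have -> : 2 * w = w + w by ring. by rewrite sgnD sgnK. Qed.
Lemma sgnW a b w : a = b + 2 * w -> sgn a = sgn b :> k.
Proof. by move=> ->; rewrite sgnD sgn2 mulr1. Qed.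
Lemma sgnB a b : sgn (a - b) = sgn (a + b) :> k.
Proof. by rewrite !sgnD sgnN. Qed.
Section Lin.
Context {U V : lmodType k} {f : U -> V} (hf : lin f).
Lemma lin0 : f 0 = 0.
Proof. have := hf 1 0 0; rewrite addr0 !scale1r => h; apply: (@addrI _ (f 0)); by rewrite addr0 -h. Qed.
Lemma linD x y : f (x + y) = f x + f y.
Proof. by have := hf 1 x y; rewrite !scale1r. Qed.
Lemma linZ a x : f (a *: x) = a *: f x.
Proof. by have := hf a x 0; rewrite !addr0 lin0 addr0. Qed.
Lemma linN x : f (- x) = - f x.
Proof. by rewrite -scaleN1r linZ scaleN1r. Qed.
Lemma linB x y : f (x - y) = f x - f y.
Proof. by rewrite linD linN. Qed.
Lemma lin_sum {I : Type} (r : seq I) (P : pred I) (F : I -> U) :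
  f (\sum_(i <- r | P i) F i) = \sum_(i <- r | P i) f (F i).
Proof. elim/big_rec2: _ => [|i y1 y2 _ <-]; by rewrite ?lin0 ?linD. Qed.
End Lin.

Lemma linP {U V : lmodType k} {f : U -> V} :
  (forall x y, f (x + y) = f x + f y) -> (forall a x, f (a *: x) = a *: f x) -> lin f.
Proof. by move=> hD hZ a x y; rewrite hD hZ. Qed.

Lemma lin_id {U : lmodType k} : lin (fun x : U => x). Proof. by []. Qed.
Lemma lin_comp {U V W : lmodType k} {f : U -> V} {g : V -> W} :
  lin f -> lin g -> lin (fun x => g (f x)).
Proof. by move=> hf hg a x y; rewrite hf hg. Qed.
Lemma lin_Z {U V : lmodType k} {f : U -> V} c : lin f -> lin (fun x => c *: f x).
Proof. by move=> hf a x y; rewrite hf scalerDr !scalerA mulrC. Qed.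
Lemma lin_add {U V : lmodType k} {f g : U -> V} : lin f -> lin g -> lin (fun x => f x + g x).
Proof. by move=> hf hg; apply: linP => [x y|a x]; rewrite ?(linD hf) ?(linD hg) ?(linZ hf) ?(linZ hg); [rewrite addrACA|rewrite scalerDr]. Qed.
Lemma lin_sub {U V : lmodType k} {f g : U -> V} : lin f -> lin g -> lin (fun x => f x - g x).
Proof. by move=> hf hg; apply: linP => [x y|a x]; rewrite ?(linD hf) ?(linD hg) ?(linZ hf) ?(linZ hg); [rewrite opprD addrACA|rewrite scalerBr]. Qed.
Lemma lin_sZ {U V : lmodType k} {s : U -> k^o} {v : V} : lin s -> lin (fun x => s x *: v).
Proof. by move=> hs a x y; rewrite hs scalerDl -scalerA. Qed.
Lemma lin_sM {U : lmodType k} {s : U -> k^o} {c : k} : lin s -> lin (fun x => (c * s x : k^o)).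
Proof. by move=> hs a x y; rewrite hs /GRing.scale /=; ring. Qed.
Lemma lin_Ms {U : lmodType k} {s : U -> k^o} {c : k} : lin s -> lin (fun x => (s x * c : k^o)).
Proof. by move=> hs a x y; rewrite hs /GRing.scale /=; ring. Qed.
Lemma lin_zero {U V : lmodType k} : lin (fun _ : U => 0 : V).
Proof. by move=> a x y; rewrite scaler0 addr0. Qed.

Lemma gcast_id {V : int -> lmodType k} a (x : V a) : gcast a x = x.
Proof.
rewrite /gcast; case: eqP => // e.
by rewrite (eq_irrelevance e erefl).
Qed.
Lemma gcast_ne {V : int -> lmodType k} a b (x : V a) : a != b -> gcast b x = 0.
Proof. by rewrite /gcast; case: eqP. Qed.
Lemma gcast_lin {V : int -> lmodType k} a b : lin (@gcast _ V a b).
Proof.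
have [<-|ne] := eqVneq a b; first by move=> c x y; rewrite !gcast_id.
by move=> c x y; rewrite !gcast_ne // scaler0 addr0.
Qed.
Lemma gcastK {V : int -> lmodType k} {W : Type} (F : forall t, V t -> W) a b (x : V a) :
  a = b -> F a x = F b (gcast b x).
Proof. by move=> e; subst; rewrite gcast_id. Qed.
Lemma gcastK0 {V : int -> lmodType k} {W : lmodType k} (F : forall t, V t -> W) a b (x : V a) :
  (forall t, lin (F t)) -> a != b -> F b (gcast b x) = 0.
Proof. by move=> hF ne; rewrite gcast_ne // (lin0 (hF b)). Qed.

End L1.



Section L2.
Context {k : fieldType}.

Section Tev.
Context {A C : int -> lmodType k} {W : lmodType k}.
Implicit Types (G : forall p q, A p -> C q -> W).

Lemma tev_ext {G G' n} (t : tens A C n) :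
  (forall p q (x : A p) (y : C q), q = n - p -> G p q x y = G' p q x y) ->
  tev G t = tev G' t.
Proof. by move=> h; apply: eq_bigr => e _; apply: h. Qed.

Lemma tev_nil {G n} : tev G ([::] : tens A C n) = 0.
Proof. by rewrite /tev big_nil. Qed.

Lemma tev_cat {G n} (t1 t2 : tens A C n) : tev G (t1 ++ t2) = tev G t1 + tev G t2.
Proof. by rewrite /tev big_cat. Qed.

Lemma tev_add {G G' n} (t : tens A C n) :
  tev (fun p q x y => G p q x y + G' p q x y) t = tev G t + tev G' t.
Proof. by rewrite /tev big_split. Qed.

Lemma tev_sub {G G' n} (t : tens A C n) :
  tev (fun p q x y => G p q x y - G' p q x y) t = tev G t - tev G' t.
Proof. by rewrite /tev sumrB. Qed.

Lemma tev_scale c {G n} (t : tens A C n) :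
  tev (fun p q x y => c *: G p q x y) t = c *: tev G t.
Proof. by rewrite /tev scaler_sumr. Qed.

Lemma tev_lin {W' : lmodType k} (L : W -> W') {G n} (t : tens A C n) : lin L ->
  L (tev G t) = tev (fun p q x y => L (G p q x y)) t.
Proof. by move=> hL; rewrite /tev (lin_sum hL). Qed.

Lemma tev_tscale c {G n} (t : tens A C n) : (forall p q y, lin (fun x => G p q x y)) ->
  tev G (tscale c t) = c *: tev G t.
Proof.
move=> hG; rewrite /tev /tscale big_map scaler_sumr; apply: eq_bigr => e _ /=.
by rewrite (linZ (hG _ _ _)).
Qed.

Lemma lin_tev {U : lmodType k} {G : U -> forall p q, A p -> C q -> W} {n} (t : tens A C n) :
  (forall p q x y, lin (fun u => G u p q x y)) -> lin (fun u => tev (G u) t).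
Proof.
move=> h a u v; rewrite /tev scaler_sumr -big_split; apply: eq_bigr => e _ /=.
exact: h.
Qed.

End Tev.

Lemma tev_text {B M M' : int -> lmodType k} {W : lmodType k} (F : tmap B M M')
   (G : forall p q, B p -> M' q -> W) {n} (t : tens B M n) s :
  tev G (text F t s) = tev (fun q r y m => tev G (F q r s y m)) t.
Proof. by rewrite /tev /text big_flatten /= big_map. Qed.

Lemma bilinP {A C : int -> lmodType k} {W : lmodType k} {G : forall p q, A p -> C q -> W} :
  (forall p q y, lin (fun x => G p q x y)) -> (forall p q x, lin (G p q x)) -> bilin G.
Proof. by move=> h1 h2 p q; split. Qed.

Lemma bilin1 {A C : int -> lmodType k} {W : lmodType k} {G : forall p q, A p -> C q -> W} :
  bilin G -> forall p q y, lin (fun x => G p q x y).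
Proof. by move=> h p q; case: (h p q). Qed.
Lemma bilin2 {A C : int -> lmodType k} {W : lmodType k} {G : forall p q, A p -> C q -> W} :
  bilin G -> forall p q x, lin (G p q x).
Proof. by move=> h p q; case: (h p q). Qed.

Lemma trilinP {A A' C : int -> lmodType k} {W : lmodType k}
  {H : forall p q r, A p -> A' q -> C r -> W} :
  (forall p q r y z, lin (fun x => H p q r x y z)) ->
  (forall p q r x z, lin (fun y => H p q r x y z)) ->
  (forall p q r x y, lin (H p q r x y)) -> trilin H.
Proof. by move=> h1 h2 h3 p q r; split. Qed.

End L2.



Section L3.
Context {k : fieldType} {B : int -> lmodType k} {C : dgcoalg B} (hC : is_dgcoalg C).

Lemma cu_r {W : lmodType k} (L : forall q, B q -> W) (hL : forall q, lin (L q)) i (b : B i) :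
  tev (fun p q x y => eps C y *: L p x) (cop C b) = L i b.
Proof. exact: counit_r C hC W L hL i b. Qed.
Lemma cu_l {W : lmodType k} (L : forall q, B q -> W) (hL : forall q, lin (L q)) i (b : B i) :
  tev (fun p q x y => eps C x *: L q y) (cop C b) = L i b.
Proof. exact: counit_l C hC W L hL i b. Qed.
Lemma coas {W : lmodType k} (H : forall p q r, B p -> B q -> B r -> W) (hH : trilin H) i (b : B i) :
      tev (fun p q x y => tev (fun p' q' x1 x2 => H p' q' q x1 x2 y) (cop C x))
          (cop C b)
    = tev (fun p q x y => tev (fun p' q' y1 y2 => H p p' q' x y1 y2) (cop C y))
          (cop C b).
Proof. exact: coassoc C hC W H hH i b. Qed.
Lemma copL {W : lmodType k} (G : forall p q, B p -> B q -> W) (hG : bilin G) i :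
  lin (fun b : B i => tev G (cop C b)).
Proof. exact: cop_lin C hC W G hG i. Qed.
Lemma cod {W : lmodType k} (G : forall p q, B p -> B q -> W) (hG : bilin G) i (b : B i) :
      tev G (cop C (dB C b))
    = tev (fun p q x y => G (p + 1) q (dB C x) y + sgn p *: G p (q + 1) x (dB C y))
          (cop C b).
Proof. exact: coder C hC W G hG i b. Qed.
Lemma dB2 i (b : B i) : dB C (dB C b) = 0. Proof. exact: dB_sq C hC i b. Qed.
Lemma epsd i (b : B i) : eps C (dB C b) = 0. Proof. exact: eps_dB C hC i b. Qed.

Lemma epsL i : lin (@eps _ B C i). Proof. exact: eps_lin C hC i. Qed.
Lemma eps0 i (b : B i) : i != 0 -> eps C b = 0. Proof. by move=> h; apply: (@eps_deg _ _ C hC i h b). Qed.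
Lemma dBL i : lin (@dB _ B C i). Proof. exact: dB_lin C hC i. Qed.

Lemma tev_eps_gcast {M : int -> lmodType k} {W : lmodType k} (K : forall t, M t -> W)
  (hK : forall t, lin (K t)) {s} (T : tens B M s) :
  tev (fun q t y m' => eps C y *: K t m') T
  = K s (tev (fun q t (y : B q) (m' : M t) => eps C y *: gcast s m') T).
Proof.
rewrite (tev_lin _ _ (hK s)); apply: tev_ext => q t y m' et.
rewrite (linZ (hK s)); have [q0|nz] := eqVneq q 0.
  by rewrite -(gcastK K) // et q0 subr0.
by rewrite eps0 // !scale0r.
Qed.

Lemma epsg_bilin (M : int -> lmodType k) s :
  bilin (fun q t (y : B q) (m' : M t) => eps C y *: gcast s m').
Proof. apply: bilinP => *; [apply: lin_sZ; exact: epsL | apply: lin_Z; exact: gcast_lin]. Qed.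

Section Tm.
Context {M M' : int -> lmodType k} {n : int} {f : tmap B M M'} (hf : is_tmap n f).

Lemma comp_bilin s : bilin (fun p r x m => comp_ C f p r s x m).
Proof. exact: (tmap_bilin _ _ hf _ _ (epsg_bilin M' s) s). Qed.
Lemma comp_lin1 p r s (m : M r) : lin (fun x : B p => comp_ C f p r s x m).
Proof. exact: (bilin1 (comp_bilin s)). Qed.
Lemma comp_lin2 p r s (x : B p) : lin (comp_ C f p r s x).
Proof. exact: (bilin2 (comp_bilin s)). Qed.

Lemma tmap_zero {W : lmodType k} {G : forall p q, B p -> M' q -> W} {p r s} (x : B p) (m : M r) :
  bilin G -> s != p + r + n -> tev G (f p r s x m) = 0.
Proof. by move=> hG hs; rewrite (@tmap_deg _ _ _ _ _ _ hf p r s hs x m W G hG) tev_nil. Qed.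

Lemma comp_zero {p r s} (x : B p) (m : M r) : s != p + r + n -> comp_ C f p r s x m = 0.
Proof. by move=> hs; apply: tmap_zero => //; apply: epsg_bilin. Qed.

Lemma comod_expand (hcf : is_comodmap C n f) {W : lmodType k}
  {K : forall q t, B q -> M' t -> W} (hK : bilin K) {p r} (x : B p) (m : M r) :
  tev K (f p r (p + r + n) x m)
  = tev (fun a c x1 x2 => sgn (n * a) *:
           K a (p + r + n - a) x1 (comp_ C f c r (p + r + n - a) x2 m)) (cop C x).
Proof.
pose H := fun a c t (y1 : B a) (y2 : B c) (m' : M' t) => eps C y2 *: K a t y1 m'.
have hH : trilin H.
  apply: trilinP => * /=; rewrite /H.
  - by apply: lin_Z; apply: (bilin1 hK).
  - by apply: lin_sZ; apply: epsL.
  - by apply: lin_Z; apply: (bilin2 hK).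
have := hcf W H hH p r x m; rewrite /H.
have -> : tev (fun q t y m' => tev (fun a c (y1 : B a) (y2 : B c) => eps C y2 *: K a t y1 m') (cop C y))
   (f p r (p + r + n) x m) = tev K (f p r (p + r + n) x m).
  apply: tev_ext => q t y m' _.
  by rewrite (cu_r (fun a y1 => K a t y1 m') (fun a => bilin1 hK a t m')).
move=> ->; apply: tev_ext => a c x1 x2 _; congr (_ *: _).
by rewrite /comp_ (tev_eps_gcast (fun t m' => K a t x1 m') (fun t => bilin2 hK a t x1)).
Qed.

End Tm.

Lemma coder_expand {M : int -> lmodType k} {dM : tmap B M M}
  (hcd : is_coder C dM) {W : lmodType k}
  {K : forall q t, B q -> M t -> W} (hK : bilin K) {p r} (x : B p) (m : M r) :
  tev K (dM p r (p + r + 1) x m)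
  = K (p + 1) r (dB C x) m +
    tev (fun a c x1 x2 => sgn a *:
           K a (p + r + 1 - a) x1 (comp_ C dM c r (p + r + 1 - a) x2 m)) (cop C x).
Proof.
pose H := fun a c t (y1 : B a) (y2 : B c) (m' : M t) => eps C y2 *: K a t y1 m'.
have hH : trilin H.
  apply: trilinP => * /=; rewrite /H.
  - by apply: lin_Z; apply: (bilin1 hK).
  - by apply: lin_sZ; apply: epsL.
  - by apply: lin_Z; apply: (bilin2 hK).
have := hcd W H hH p r x m; rewrite /H.
have -> : tev (fun q t y m' => tev (fun a c (y1 : B a) (y2 : B c) => eps C y2 *: K a t y1 m') (cop C y))
   (dM p r (p + r + 1) x m) = tev K (dM p r (p + r + 1) x m).
  apply: tev_ext => q t y m' _.
  by rewrite (cu_r (fun a y1 => K a t y1 m') (fun a => bilin1 hK a t m')).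
move=> ->; rewrite tev_add; congr (_ + _).
  rewrite (cu_r (fun a y1 => K (a + 1) r (dB C y1) m)) // => a.
  exact: (lin_comp (dBL a) (bilin1 hK (a + 1) r m)).
apply: tev_ext => a c x1 x2 _; congr (_ *: _).
by rewrite /comp_ (tev_eps_gcast (fun t m' => K a t x1 m') (fun t => bilin2 hK a t x1)).
Qed.

End L3.


Section Wrap.
Context {k : fieldType} {V W : int -> lmodType k}.
Lemma phL {n} {phi : ghom V W} (h : is_ghom n phi) i j : lin (phi i j).
Proof. exact: ghom_lin n phi h i j. Qed.
Lemma ph0 {n} {phi : ghom V W} (h : is_ghom n phi) {i j} : j != i + n -> forall x, phi i j x = 0.
Proof. move=> hj x; exact: ghom_deg n phi h i j hj x. Qed.
Lemma bsL {m} {bs : dual V} (h : is_dhom m bs) q : lin (bs q).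
Proof. exact: dhom_lin m bs h q. Qed.
Lemma bs0 {m} {bs : dual V} (h : is_dhom m bs) {q} : q + m != 0 -> forall y, bs q y = 0.
Proof. move=> hq y; exact: dhom_deg m bs h q hq y. Qed.
End Wrap.

Section L4.
Context {k : fieldType} {B : int -> lmodType k} {C : dgcoalg B} (hC : is_dgcoalg C).

Lemma tev0 {A A' : int -> lmodType k} {W : lmodType k} {n} (t : tens A A' n) :
  tev (fun _ _ _ _ => (0 : W)) t = 0.
Proof. by rewrite /tev big1. Qed.

Lemma tev_sZ {A A' : int -> lmodType k} {W : lmodType k} (G : forall p q, A p -> A' q -> k^o)
   {n} (t : tens A A' n) (v : W) :
  tev G t *: v = tev (fun p q x y => G p q x y *: v) t.
Proof. by rewrite (tev_lin (fun c : k^o => c *: v)) //; apply: lin_sZ. Qed.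

Section Act.
Context {M : int -> lmodType k}.

Lemma act_ghom n m (phi : ghom B M) (bs : dual B) :
  is_ghom n phi -> is_dhom m bs -> is_ghom (n + m) (act C m phi bs).
Proof.
move=> hp hb; split => i j.
  apply: copL => //; apply: bilinP => p q y.
    by apply: (lin_Z (sgn (m * p))); apply: lin_Z; apply: (phL hp).
  by apply: (lin_Z (sgn (m * p))); apply: lin_sZ; apply: (bsL hb).
move=> hj b; rewrite /act -(tev0 (cop C b)); apply: tev_ext => p q x y hq.
have [hm|hm] := eqVneq (q + m) 0; last by rewrite (bs0 hb hm) !scale0r scaler0.
rewrite (ph0 hp) ?scaler0 //; move/eqP: hm => hm.
apply: contraNneq hj => ->; apply/eqP; lia.
Qed.


Lemma act_assoc n m1 m2 (phi : ghom B M) (b1 b2 : dual B) :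
  is_ghom n phi -> is_dhom m1 b1 -> is_dhom m2 b2 -> forall i j b,
  act C m2 (act C m1 phi b1) b2 i j b = act C (m1 + m2) phi (dmul C b1 b2) i j b.
Proof.
move=> hp hb1 hb2 i j b.
pose H := fun p' q' q (x1 : B p') (x2 : B q') (y : B q) =>
  ((sgn (m2 * (p' + q')) * sgn (m1 * p')) * (b1 q' x2 * b2 q y)) *: phi p' j x1.
have hH : trilin H.
  apply: trilinP => p' q' q * /=; rewrite /H.
  - by apply: lin_Z; apply: (phL hp).
  - by apply: lin_sZ; apply: lin_sM; apply: lin_Ms; apply: (bsL hb1).
  - by apply: lin_sZ; apply: lin_sM; apply: lin_sM; apply: (bsL hb2).
rewrite /act.
transitivity (tev (fun p q x y => tev (fun p' q' x1 x2 => H p' q' q x1 x2 y) (cop C x)) (cop C b)).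
  apply: tev_ext => p q x y hq; rewrite -!tev_scale; apply: tev_ext => p' q' x1 x2 hq'.
  rewrite /H; have -> : p = p' + q' by lia.
  by rewrite !scalerA; congr (_ *: _); ring.
rewrite coas //; apply: tev_ext => p q x y hq.
rewrite /dmul tev_sZ -tev_scale; apply: tev_ext => p' q' y1 y2 hq'.
rewrite /H !scalerA; congr (_ *: _).
have [e1|e1] := eqVneq (p' + m1) 0; last by rewrite (bs0 hb1 e1) !(mul0r, mulr0).
have [e2|e2] := eqVneq (q' + m2) 0; last by rewrite (bs0 hb2 e2) !(mul0r, mulr0).
have hs : sgn (m2 * (p + p')) * sgn (m1 * p) = sgn ((m1 + m2) * p) * sgn (p' * q') :> k.
  rewrite -!sgnD; apply: (sgnW _ _ (- (m1 * m2))).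
  move/eqP: e1 => e1; move/eqP: e2 => e2.
  have -> : p' = - m1 by lia.
  have -> : q' = - m2 by lia.
  ring.
transitivity (sgn (m2 * (p + p')) * sgn (m1 * p) * (b1 p' y1 * b2 q' y2)); first by [].
by rewrite hs; ring.
Qed.

Lemma act_unit n (phi : ghom B M) : is_ghom n phi -> forall i j b,
  act C 0 phi (@eps k B C) i j b = phi i j b.
Proof.
move=> hp i j b; rewrite /act -(cu_r hC (fun p x => phi p j x) (fun p => phL hp p j) i b).
by apply: tev_ext => p q x y _; rewrite mul0r sgn0 scale1r.
Qed.

Lemma act_linphi n m c (phi psi : ghom B M) (bs : dual B) :
  is_ghom n phi -> is_ghom n psi -> is_dhom m bs -> forall i j b,
  act C m (glin c phi psi) bs i j b = glin c (act C m phi bs) (act C m psi bs) i j b.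
Proof.
move=> _ _ _ i j b; rewrite /act /glin -tev_scale -tev_add.
apply: tev_ext => p q x y _.
by rewrite !scalerDr !scalerA; congr (_ + _); congr (_ *: _); ring.
Qed.

Lemma act_linbs n m c (phi : ghom B M) (b1 b2 : dual B) :
  is_ghom n phi -> is_dhom m b1 -> is_dhom m b2 -> forall i j b,
  act C m phi (dlin c b1 b2) i j b = glin c (act C m phi b1) (act C m phi b2) i j b.
Proof.
move=> _ _ _ i j b; rewrite /act /glin /dlin -tev_scale -tev_add.
apply: tev_ext => p q x y _.
by rewrite scalerDl scalerDr !scalerA; congr (_ + _); congr (_ *: _); rewrite /GRing.scale /=; ring.
Qed.

End Act.
End L4.


Section L5.
Context {k : fieldType} {B : int -> lmodType k} {C : dgcoalg B} (hC : is_dgcoalg C).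

Lemma coas_comp {M M1 : int -> lmodType k} {W : lmodType k}
  (F : forall c r s, B c -> M r -> M1 s) (G : forall p r, B p -> M1 r -> W)
  (n1 a : int) (phi : ghom B M) (j : int)
  (hF : forall s, bilin (fun c r x m => F c r s x m))
  (hG : bilin G)
  (hp : forall i j, lin (phi i j)) i (b : B i) :
  tev (fun p q x y => sgn (p * a) *: tev (fun a' c x1 x2 => sgn (n1 * a') *:
        G a' (p + (q + a) + n1 - a') x1
          (F c (q + a) (p + (q + a) + n1 - a') x2 (phi q (q + a) y))) (cop C x)) (cop C b)
  = tev (fun p q x y => sgn (p * (a + n1)) *: G p (q + (a + n1)) x
        (tev (fun p' q' y1 y2 => sgn (p' * a) *:
            F p' (q' + a) (q + (a + n1)) y1 (phi q' (q' + a) y2)) (cop C y))) (cop C b).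
Proof.
pose H := fun a' c d (x1 : B a') (x2 : B c) (y : B d) =>
  (sgn ((a' + c) * a) * sgn (n1 * a')) *:
   G a' (c + d + a + n1) x1 (F c (d + a) (c + d + a + n1) x2 (phi d (d + a) y)).
have hH : trilin H.
  apply: trilinP => a' c d * /=; rewrite /H; apply: lin_Z.
  - exact: (bilin1 hG).
  - exact: (lin_comp (bilin1 (hF _) _ _ _) (bilin2 hG _ _ _)).
  - exact: (lin_comp (hp _ _) (lin_comp (bilin2 (hF _) _ _ _) (bilin2 hG _ _ _))).
transitivity (tev (fun p q x y => tev (fun p' q' x1 x2 => H p' q' q x1 x2 y) (cop C x)) (cop C b)).
  apply: tev_ext => p q x y hq; rewrite -tev_scale; apply: tev_ext => a' c x1 x2 hc.
  rewrite /H; have -> : p = a' + c by lia.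
  have -> : a' + c + (q + a) + n1 - a' = c + q + a + n1 by ring.
  by rewrite scalerA.
rewrite coas //; apply: tev_ext => p q x y hq.
rewrite (tev_lin _ _ (bilin2 hG _ _ _)) -tev_scale; apply: tev_ext => p' q' y1 y2 hq'.
rewrite /H; have -> : q = p' + q' by lia.
rewrite (linZ (bilin2 hG _ _ _)) scalerA; congr (_ *: _).
  by rewrite -!sgnD; apply: (sgnW _ _ 0); ring.
by have -> : p' + q' + (a + n1) = p' + q' + a + n1 by ring.
Qed.

End L5.


Section L6.
Context {k : fieldType} {B : int -> lmodType k} {C : dgcoalg B} (hC : is_dgcoalg C).
Context {M : int -> lmodType k} {dM : tmap B M M} (hM : is_freedgcomod C dM).

Let hMt : is_tmap 1 dM := dM_tmap C dM hM.
Let hMc : is_coder C dM := dM_coder C dM hM.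
Local Notation dbar := (comp_ C dM).

Lemma dbar_sq p r s (x : B p) (m : M r) :
  dbar (p + 1) r s (dB C x) m + tev (fun a c x1 x2 => sgn a *:
     dbar a (p + r + 1 - a) s x1 (dbar c r (p + r + 1 - a) x2 m)) (cop C x) = 0.
Proof.
have hG := epsg_bilin hC M s.
have := dM_sq C dM hM p r s x m (M s) _ hG; rewrite tev_nil /tcomp tev_text.
by rewrite (coder_expand hC hMc (K := fun q t y m' => comp_ C dM q t s y m') (comp_bilin hC hMt s)).
Qed.


Lemma lmod_aux1 (V : lmodType k) (c s : k) (A Bv u v : V) :
  (c *: A + Bv) - s *: (c *: u + v) = c *: (A - s *: u) + (Bv - s *: v).
Proof. by rewrite scalerDr scalerBr !scalerA [s * c]mulrC opprD addrACA. Qed.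

Lemma dv_ghom n (phi : ghom B M) : is_ghom n phi -> is_ghom (n + 1) (dvee C dbar n phi).
Proof.
move=> hp; split => i j.
  apply: lin_sub.
    apply: (copL hC); apply: bilinP => p q y.
      by apply: lin_Z; apply: (comp_lin1 hC hMt).
    by apply: lin_Z; apply: (lin_comp (phL hp q (q + n)) (comp_lin2 hC hMt p (q + n) j y)).
  by apply: lin_Z; apply: (lin_comp (dBL hC i) (phL hp (i + 1) j)).
move=> hj b; rewrite /dvee (ph0 hp) ?scaler0 ?subr0; last first.
  by apply: contraNneq hj => ->; apply/eqP; lia.
rewrite -(tev0 (cop C b)); apply: tev_ext => p q x y hq.
rewrite (comp_zero hC hMt) ?scaler0 //.
by apply: contraNneq hj => ->; apply/eqP; lia.
Qed.

Lemma dv_lin n c (phi psi : ghom B M) : is_ghom n phi -> is_ghom n psi -> forall i j b,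
  dvee C dbar n (glin c phi psi) i j b = glin c (dvee C dbar n phi) (dvee C dbar n psi) i j b.
Proof.
move=> hp hq i j b; rewrite /dvee /glin -lmod_aux1; congr (_ - _).
rewrite -tev_scale -tev_add; apply: tev_ext => p q x y _.
rewrite (linD (comp_lin2 hC hMt _ _ _ _)) (linZ (comp_lin2 hC hMt _ _ _ _)).
by rewrite scalerDr !scalerA mulrC.
Qed.


Lemma dv_sq n (phi : ghom B M) : is_ghom n phi -> forall i j b,
  dvee C dbar (n + 1) (dvee C dbar n phi) i j b = 0.
Proof.
move=> hp i j b; rewrite /dvee dB2 // (lin0 (phL hp _ _)) scaler0 subr0.
rewrite (cod hC); last first.
  apply: bilinP => p q y; first by apply: lin_Z; apply: (comp_lin1 hC hMt).
  by apply: lin_Z; apply: (lin_comp (phL hp q (q + n)) (comp_lin2 hC hMt p (q + n) j y)).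
under tev_ext => p q x y hq do rewrite (linB (comp_lin2 hC hMt _ _ _ _)) (linZ (comp_lin2 hC hMt _ _ _ _)) scalerBr.
rewrite tev_sub tev_add scalerDr.
rewrite -(coas_comp hC dbar (fun p r x m => dbar p r j x m) 1 n phi j (comp_bilin hC hMt) (comp_bilin hC hMt j) (phL hp) i b).
have key (X Y Z U : M j) : X = Z -> Y + U = 0 -> (X - Y) - (Z + U) = 0.
  by move=> -> hYU; rewrite opprD addrACA subrr add0r -opprD hYU oppr0.
apply: key.
  rewrite -tev_scale; apply: tev_ext => p q x y hq.
  under tev_ext => a' c x1 x2 _ do rewrite mul1r.
  move/eqP: (dbar_sq p (q + n) j x (phi q (q + n) y)); rewrite addr_eq0 => /eqP ->.
  rewrite !scalerN !scalerA -scaleNr; congr (_ *: _).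
  rewrite -!sgnD -mulN1r -sgn1 -sgnD; apply: (sgnW _ _ (- n - 1)); ring.
rewrite -tev_scale -tev_add -(tev0 (cop C b)); apply: tev_ext => p q x y hq.
have -> : q + 1 + n = q + (n + 1) by ring.
rewrite !scalerA -scalerDl.
have -> : sgn (n + 1) * (sgn p * sgn (p * n)) = - (sgn (p * (n + 1)) * sgn n) :> k.
  rewrite -!sgnD -mulN1r -sgn1 -sgnD; apply: (sgnW _ _ 0); ring.
by rewrite addrN scale0r.
Qed.


Lemma dv_leibniz n m (phi : ghom B M) (bs : dual B) :
  is_ghom n phi -> is_dhom m bs -> forall i j b,
  dvee C dbar (n + m) (act C m phi bs) i j b
  = act C m (dvee C dbar n phi) bs i j b + sgn n *: act C (m + 1) phi (ddual C bs) i j b.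
Proof.
move=> hp hb i j b; rewrite /dvee /act /ddual.
rewrite (cod hC); last first.
  apply: bilinP => p q y; first by apply: (lin_Z (sgn (m * p))); apply: lin_Z; apply: (phL hp).
  by apply: (lin_Z (sgn (m * p))); apply: lin_sZ; apply: (bsL hb).
under [X in _ = X + _]tev_ext => p q x y hq do rewrite !scalerBr.
rewrite tev_sub tev_add scalerDr.
have key (X Y1 Y2 Z W1 W2 : M j) : X = Z -> Y1 = W1 -> Y2 + W2 = 0 -> X - (Y1 + Y2) = (Z - W1) + W2.
  by move=> -> -> /eqP; rewrite addr_eq0 => /eqP ->; rewrite opprD addrA opprK.
apply: key.
- pose H := fun a c d (x1 : B a) (x2 : B c) (y : B d) =>
    (sgn (m * (a + c)) * sgn (a * n) * bs d y) *: dbar a (c + n) j x1 (phi c (c + n) x2).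
  have hH : trilin H.
    apply: trilinP => a c d * /=; rewrite /H.
    - by apply: lin_Z; apply: (comp_lin1 hC hMt).
    - by apply: lin_Z; apply: (lin_comp (phL hp _ _) (comp_lin2 hC hMt _ _ _ _)).
    - by apply: lin_sZ; apply: lin_sM; apply: (bsL hb).
  symmetry.
  transitivity (tev (fun p q x y => tev (fun p' q' x1 x2 => H p' q' q x1 x2 y) (cop C x)) (cop C b)).
    apply: tev_ext => p q x y hq; rewrite -!tev_scale; apply: tev_ext => a c x1 x2 hc.
    rewrite /H; have -> : p = a + c by lia.
    by rewrite !scalerA; congr (_ *: _); ring.
  rewrite coas //; apply: tev_ext => p q x y hq.
  rewrite (tev_lin _ _ (comp_lin2 hC hMt _ _ _ _)) -tev_scale; apply: tev_ext => p' q' y1 y2 hq'.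
  rewrite /H; have [e|e] := eqVneq (q' + m) 0; last first.
    by rewrite (bs0 hb e) !scale0r mulr0 scale0r scaler0 (lin0 (comp_lin2 hC hMt _ _ _ _)) scaler0.
  have -> : q + (n + m) = p' + n by move/eqP: e => e; lia.
  rewrite (linZ (comp_lin2 hC hMt _ _ _ _)) (linZ (comp_lin2 hC hMt _ _ _ _)) !scalerA.
  congr (_ *: _).
  have hs : sgn (p * (n + m)) * sgn (m * p') = sgn (m * (p + p')) * sgn (p * n) :> k.
    by rewrite -!sgnD; apply: (sgnW _ _ 0); ring.
  by rewrite -hs; ring.
- rewrite -tev_scale; apply: tev_ext => p q x y hq.
  rewrite !scalerA; congr (_ *: _).
  have hs : sgn (n + m) * sgn (m * (p + 1)) = sgn (m * p) * sgn n :> k.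
    by rewrite -!sgnD; apply: (sgnW _ _ m); ring.
  transitivity (sgn (n + m) * sgn (m * (p + 1)) * bs q y); first by ring.
  by rewrite hs; ring.
- rewrite -!tev_scale -tev_add -(tev0 (cop C b)); apply: tev_ext => p q x y hq.
  rewrite !scalerA -scalerDl.
  have [e|e] := eqVneq (q + 1 + m) 0; last by rewrite (bs0 hb e) !(mulr0, mul0r) addr0 scale0r.
  have hs : sgn n * sgn ((m + 1) * p) * sgn q = - (sgn (n + m) * sgn p * sgn (m * p)) :> k.
    rewrite -!sgnD -mulN1r -sgn1 -sgnD; apply: (sgnW _ _ (- m - 1)).
    have -> : q = - m - 1 by move/eqP: e => e; lia.
    ring.
  transitivity (((sgn (n + m) * sgn p * sgn (m * p) + sgn n * sgn ((m + 1) * p) * sgn q)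
     * bs (q + 1) (dB C y)) *: phi p j x); first by congr (_ *: _); ring.
  by rewrite hs addrN mul0r scale0r.
Qed.

End L6.


Section L7.
Context {k : fieldType} {B : int -> lmodType k} {C : dgcoalg B} (hC : is_dgcoalg C).

Section F.
Context {M M' : int -> lmodType k} {n : int} {f : tmap B M M'} (hf : is_tmap n f).
Local Notation fbar := (comp_ C f).

Lemma vee_ghom a (phi : ghom B M) : is_ghom a phi -> is_ghom (a + n) (vee C f a phi).
Proof.
move=> hp; split => i j.
  apply: (copL hC); apply: bilinP => p q y.
    by apply: lin_Z; apply: (comp_lin1 hC hf).
  by apply: lin_Z; apply: (lin_comp (phL hp q (q + a)) (comp_lin2 hC hf p (q + a) j y)).
move=> hj b; rewrite /vee /fvee -(tev0 (cop C b)); apply: tev_ext => p q x y hq.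
rewrite (comp_zero hC hf) ?scaler0 //.
by apply: contraNneq hj => ->; apply/eqP; lia.
Qed.

Lemma vee_lin a c (phi psi : ghom B M) : is_ghom a phi -> is_ghom a psi -> forall i j b,
  vee C f a (glin c phi psi) i j b = glin c (vee C f a phi) (vee C f a psi) i j b.
Proof.
move=> hp hq i j b; rewrite /vee /fvee /glin -tev_scale -tev_add; apply: tev_ext => p q x y _.
rewrite (linD (comp_lin2 hC hf _ _ _ _)) (linZ (comp_lin2 hC hf _ _ _ _)).
by rewrite scalerDr !scalerA mulrC.
Qed.

Lemma vee_act a m (phi : ghom B M) (bs : dual B) : is_ghom a phi -> is_dhom m bs ->
  forall i j b, vee C f (a + m) (act C m phi bs) i j b = act C m (vee C f a phi) bs i j b.
Proof.
move=> hp hb i j b; rewrite /vee /fvee /act.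
pose H := fun a' c d (x1 : B a') (x2 : B c) (y : B d) =>
  (sgn (m * (a' + c)) * sgn (a' * a) * bs d y) *: fbar a' (c + a) j x1 (phi c (c + a) x2).
have hH : trilin H.
  apply: trilinP => a' c d * /=; rewrite /H.
  - by apply: lin_Z; apply: (comp_lin1 hC hf).
  - by apply: lin_Z; apply: (lin_comp (phL hp _ _) (comp_lin2 hC hf _ _ _ _)).
  - by apply: lin_sZ; apply: lin_sM; apply: (bsL hb).
symmetry.
transitivity (tev (fun p q x y => tev (fun p' q' x1 x2 => H p' q' q x1 x2 y) (cop C x)) (cop C b)).
  apply: tev_ext => p q x y hq; rewrite -!tev_scale; apply: tev_ext => a' c x1 x2 hc.
  rewrite /H; have -> : p = a' + c by lia.
  by rewrite !scalerA; congr (_ *: _); ring.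
rewrite coas //; apply: tev_ext => p q x y hq.
rewrite (tev_lin _ _ (comp_lin2 hC hf _ _ _ _)) -tev_scale; apply: tev_ext => p' q' y1 y2 hq'.
rewrite /H; have [e|e] := eqVneq (q' + m) 0; last first.
  by rewrite (bs0 hb e) !scale0r mulr0 scale0r scaler0 (lin0 (comp_lin2 hC hf _ _ _ _)) scaler0.
have -> : q + (a + m) = p' + a by move/eqP: e => e; lia.
rewrite (linZ (comp_lin2 hC hf _ _ _ _)) (linZ (comp_lin2 hC hf _ _ _ _)) !scalerA.
congr (_ *: _).
have hs : sgn (p * (a + m)) * sgn (m * p') = sgn (m * (p + p')) * sgn (p * a) :> k.
  by rewrite -!sgnD; apply: (sgnW _ _ 0); ring.
by rewrite -hs; ring.
Qed.

End F.

Lemma comp_tcomp {M M' M'' : int -> lmodType k} {n1 n2 : int} {f : tmap B M M'} {g : tmap B M' M''}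
  (hf : is_tmap n1 f) (hcf : is_comodmap C n1 f) (hg : is_tmap n2 g) p r s (x : B p) (m : M r) :
  comp_ C (tcomp n1 g f) p r s x m
  = tev (fun a' c x1 x2 => sgn (n1 * a') *: comp_ C g a' (p + r + n1 - a') s x1
          (comp_ C f c r (p + r + n1 - a') x2 m)) (cop C x).
Proof.
rewrite {1}/comp_ /tcomp tev_text.
by rewrite (comod_expand hC hcf (K := fun q t y mm => comp_ C g q t s y mm) (comp_bilin hC hg s)).
Qed.

Lemma vee_comp {M M' M'' : int -> lmodType k} {n1 n2 : int} {f : tmap B M M'} {g : tmap B M' M''}
  (hf : is_tmap n1 f) (hcf : is_comodmap C n1 f) (hg : is_tmap n2 g) a (phi : ghom B M) :
  is_ghom a phi -> forall i j b,
  vee C (tcomp n1 g f) a phi i j b = vee C g (a + n1) (vee C f a phi) i j b.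
Proof.
move=> hp i j b; rewrite /vee /fvee.
under tev_ext => p q x y hq do rewrite (comp_tcomp hf hcf hg).
exact: (coas_comp hC (comp_ C f) (fun p r x m => comp_ C g p r j x m) n1 a phi j
          (comp_bilin hC hf) (comp_bilin hC hg j) (phL hp) i b).
Qed.

Lemma gcast2 {V : int -> lmodType k} a b (x : V a) : gcast b (gcast b x) = gcast b x.
Proof.
have [<-|ne] := eqVneq a b; first by rewrite !gcast_id.
by rewrite (gcast_ne _ _ x ne) (lin0 (gcast_lin _ _)).
Qed.

Lemma vee_id {M : int -> lmodType k} a (phi : ghom B M) : is_ghom a phi -> forall i j b,
  vee C (@tid _ B M) a phi i j b = phi i j b.
Proof.
move=> hp i j b; rewrite /vee /fvee.
transitivity (gcast j (phi i (i + a) b)); last first.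
  have [e|ne] := eqVneq (i + a) j; first by rewrite e gcast_id.
  by rewrite gcast_ne // (ph0 hp) // eq_sym.
rewrite -(cu_l hC (fun q y => gcast j (phi q (q + a) y))); last first.
  by move=> q; apply: (lin_comp (phL hp _ _) (gcast_lin _ _)).
apply: tev_ext => p q x y hq.
rewrite /comp_ /tid /tev big_seq1 /=.
have [e|ne] := eqVneq p 0; last by rewrite (eps0 hC _ x ne) !scale0r scaler0.
have -> : j - p = j by rewrite e subr0.
have -> : p * a = 0 by rewrite e mul0r.
by rewrite sgn0 scale1r gcast2.
Qed.

Lemma comp_tmlin {M M' : int -> lmodType k} c (f g : tmap B M M') p r s (x : B p) (m : M r) :
  comp_ C (tmlin c f g) p r s x m = c *: comp_ C f p r s x m + comp_ C g p r s x m.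
Proof.
rewrite /comp_ /tmlin tev_cat tev_tscale // => q t y.
exact: (bilin1 (epsg_bilin hC M' s)).
Qed.

Lemma vee_tmlin {M M' : int -> lmodType k} n c (f g : tmap B M M') :
  is_tmap n f -> is_tmap n g -> forall a (phi : ghom B M), is_ghom a phi -> forall i j b,
  vee C (tmlin c f g) a phi i j b = c *: vee C f a phi i j b + vee C g a phi i j b.
Proof.
move=> hf hg a phi hp i j b; rewrite /vee /fvee -tev_scale -tev_add.
apply: tev_ext => p q x y _; rewrite comp_tmlin.
by rewrite scalerDr !scalerA mulrC.
Qed.


Lemma comp_tdiff {M M' : int -> lmodType k} {n : int} {dM : tmap B M M} {dM' : tmap B M' M'}
  {f : tmap B M M'} (hM : is_freedgcomod C dM) (hM' : is_freedgcomod C dM')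
  (hf : is_tmap n f) (hcf : is_comodmap C n f) p r s (x : B p) (m : M r) :
  comp_ C (tdiff n dM dM' f) p r s x m =
  tev (fun a' c x1 x2 => sgn (n * a') *: comp_ C dM' a' (p + r + n - a') s x1
         (comp_ C f c r (p + r + n - a') x2 m)) (cop C x)
  - sgn n *: (comp_ C f (p + 1) r s (dB C x) m +
     tev (fun a' c x1 x2 => sgn a' *: comp_ C f a' (p + r + 1 - a') s x1
         (comp_ C dM c r (p + r + 1 - a') x2 m)) (cop C x)).
Proof.
rewrite {1}/comp_ /tdiff tev_cat tev_tscale; last first.
  by move=> *; exact: (bilin1 (epsg_bilin hC M' s)).
rewrite /tcomp !tev_text scaleNr.
rewrite (comod_expand hC hcf (K := fun q t y mm => comp_ C dM' q t s y mm)
          (comp_bilin hC (dM_tmap C dM' hM') s)).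
by rewrite (coder_expand hC (dM_coder C dM hM) (K := fun q t y mm => comp_ C f q t s y mm)
          (comp_bilin hC hf s)).
Qed.

Lemma lmod_aux2 (V : lmodType k) (c s : k) (T U X : V) :
  c *: (T - s *: (U + X)) = c *: T - (s *: (c *: U) + s *: (c *: X)).
Proof. by rewrite scalerBr !scalerDr !scalerA [c * s]mulrC. Qed.

Lemma vee_tdiff {M M' : int -> lmodType k} {n : int} {dM : tmap B M M} {dM' : tmap B M' M'}
  {f : tmap B M M'} (hM : is_freedgcomod C dM) (hM' : is_freedgcomod C dM')
  (hf : is_tmap n f) (hcf : is_comodmap C n f) a (phi : ghom B M) :
  is_ghom a phi -> forall i j b,
  vee C (tdiff n dM dM' f) a phi i j b
  = dvee C (comp_ C dM') (a + n) (vee C f a phi) i j b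
    - sgn n *: vee C f (a + 1) (dvee C (comp_ C dM) a phi) i j b.
Proof.
move=> hp i j b.
have hMt := dM_tmap C dM hM.
rewrite {1}/vee {1}/fvee.
under tev_ext => p q x y hq do rewrite (comp_tdiff hM hM' hf hcf) lmod_aux2.
rewrite tev_sub tev_add !tev_scale.
rewrite /dvee /vee /fvee (cod hC); last first.
  apply: bilinP => p q y; first by apply: lin_Z; apply: (comp_lin1 hC hf).
  by apply: lin_Z; apply: (lin_comp (phL hp q (q + a)) (comp_lin2 hC hf p (q + a) j y)).
under [X in _ = _ - _ *: X]tev_ext => p q x y hq do
  rewrite (linB (comp_lin2 hC hf _ _ _ _)) (linZ (comp_lin2 hC hf _ _ _ _)) scalerBr.
rewrite tev_add tev_sub scalerDr scalerBr.
have key (A1 A2 A3 C1 C2a C2b C3a C3b : M' j) (s sn : k) :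
  A1 = C1 -> sn *: A2 = s *: C2a -> A3 = C3a -> s *: C2b = sn *: C3b ->
  A1 - (sn *: A2 + sn *: A3) = (C1 - (s *: C2a + s *: C2b)) - (sn *: C3a - sn *: C3b).
  by move=> -> -> -> ->; rewrite opprB !opprD !addrA subrK.
apply: key.
- exact: (coas_comp hC (comp_ C f) (fun p r x m => comp_ C dM' p r j x m) n a phi j
          (comp_bilin hC hf) (comp_bilin hC (dM_tmap C dM' hM') j) (phL hp) i b).
- rewrite -!tev_scale; apply: tev_ext => p q x y hq; rewrite !scalerA; congr (_ *: _).
  by rewrite -!sgnD; apply: (sgnW _ _ (- a)); ring.
- rewrite -(coas_comp hC (comp_ C dM) (fun p r x m => comp_ C f p r j x m) 1 a phi j
          (comp_bilin hC hMt) (comp_bilin hC hf j) (phL hp) i b).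
  apply: tev_ext => p q x y hq; congr (_ *: _); apply: tev_ext => a' c x1 x2 _.
  by rewrite mul1r.
- rewrite -!tev_scale; apply: tev_ext => p q x y hq.
  have -> : q + 1 + a = q + (a + 1) by ring.
  rewrite !scalerA; congr (_ *: _).
  by rewrite -!sgnD; apply: (sgnW _ _ 0); ring.
Qed.

End L7.

Theorem proposition2p2 (k : fieldType) (B : int -> lmodType k) (C : dgcoalg B) :
  is_dgcoalg C ->
  (* Part 1: for every free dg-comodule (B (x) M, dM), d_M^vee makes Hom_gr(B, M)
     a right dg-module over (B^#, d) *)
  (forall (M : int -> lmodType k) (dM : tmap B M M), is_freedgcomod C dM ->
    let dv := dvee C (comp_ C dM) in
    [/\ (* right B^#-module structure given by phi . b^# *)
        forall n m (phi : ghom B M) (bs : dual B),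
          is_ghom n phi -> is_dhom m bs -> is_ghom (n + m) (act C m phi bs),
        forall n m1 m2 (phi : ghom B M) (b1 b2 : dual B),
          is_ghom n phi -> is_dhom m1 b1 -> is_dhom m2 b2 -> forall i j b,
          act C m2 (act C m1 phi b1) b2 i j b = act C (m1 + m2) phi (dmul C b1 b2) i j b,
        forall n (phi : ghom B M), is_ghom n phi -> forall i j b,
          act C 0 phi (@eps k B C) i j b = phi i j b,
        forall n m c (phi psi : ghom B M) (bs : dual B),
          is_ghom n phi -> is_ghom n psi -> is_dhom m bs -> forall i j b,
          act C m (glin c phi psi) bs i j b = glin c (act C m phi bs) (act C m psi bs) i j b
      & forall n m c (phi : ghom B M) (b1 b2 : dual B),
          is_ghom n phi -> is_dhom m b1 -> is_dhom m b2 -> forall i j b,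
          act C m phi (dlin c b1 b2) i j b = glin c (act C m phi b1) (act C m phi b2) i j b]
    /\
    [/\ (* d_M^vee is linear, of degree 1, squares to zero *)
        forall n (phi : ghom B M), is_ghom n phi -> is_ghom (n + 1) (dv n phi),
        forall n c (phi psi : ghom B M), is_ghom n phi -> is_ghom n psi -> forall i j b,
          dv n (glin c phi psi) i j b = glin c (dv n phi) (dv n psi) i j b,
        forall n (phi : ghom B M), is_ghom n phi -> forall i j b,
          dv (n + 1) (dv n phi) i j b = 0
      & (* Leibniz rule *)
        forall n m (phi : ghom B M) (bs : dual B),
          is_ghom n phi -> is_dhom m bs -> forall i j b,
          dv (n + m) (act C m phi bs) i j b
          = act C m (dv n phi) bs i j b + sgn n *: act C (m + 1) phi (ddual C bs) i j b])
  /\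
  (* Part 2: f |-> f^vee is a dg-functor *)
  (forall (M M' M'' : int -> lmodType k) (dM : tmap B M M) (dM' : tmap B M' M')
          (dM'' : tmap B M'' M''),
    is_freedgcomod C dM -> is_freedgcomod C dM' -> is_freedgcomod C dM'' ->
    [/\ (* f^vee is a morphism of right B^#-modules of degree deg f *)
        forall n (f : tmap B M M'), is_tmap n f -> is_comodmap C n f ->
          [/\ forall a (phi : ghom B M), is_ghom a phi -> is_ghom (a + n) (vee C f a phi),
              forall a c (phi psi : ghom B M), is_ghom a phi -> is_ghom a psi ->
                forall i j b,
                vee C f a (glin c phi psi) i j b = glin c (vee C f a phi) (vee C f a psi) i j b
            & forall a m (phi : ghom B M) (bs : dual B), is_ghom a phi -> is_dhom m bs ->
                forall i j b,
                vee C f (a + m) (act C m phi bs) i j b = act C m (vee C f a phi) bs i j b],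
        (* compatibility with composition *)
        forall n1 n2 (f : tmap B M M') (g : tmap B M' M''),
          is_tmap n1 f -> is_comodmap C n1 f -> is_tmap n2 g -> is_comodmap C n2 g ->
          forall a (phi : ghom B M), is_ghom a phi -> forall i j b,
          vee C (tcomp n1 g f) a phi i j b = vee C g (a + n1) (vee C f a phi) i j b,
        (* identities *)
        forall a (phi : ghom B M), is_ghom a phi -> forall i j b,
          vee C (tid) a phi i j b = phi i j b,
        (* compatibility with the differentials of the Hom complexes *)
        forall n (f : tmap B M M'), is_tmap n f -> is_comodmap C n f ->
          forall a (phi : ghom B M), is_ghom a phi -> forall i j b,
          vee C (tdiff n dM dM' f) a phi i j b
          = dvee C (comp_ C dM') (a + n) (vee C f a phi) i j b
            - sgn n *: vee C f (a + 1) (dvee C (comp_ C dM) a phi) i j b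
      & (* linearity on Hom complexes *)
        forall n c (f g : tmap B M M'),
          is_tmap n f -> is_comodmap C n f -> is_tmap n g -> is_comodmap C n g ->
          forall a (phi : ghom B M), is_ghom a phi -> forall i j b,
          vee C (tmlin c f g) a phi i j b = c *: vee C f a phi i j b + vee C g a phi i j b]).
Proof.
move=> hC; split.
  move=> M dM hM dv; split; split.
  - by move=> n m phi bs hp hb; exact: (act_ghom hC n m phi bs hp hb).
  - by move=> n m1 m2 phi b1 b2 hp h1 h2 i j b; exact: (act_assoc hC n m1 m2 phi b1 b2 hp h1 h2 i j b).
  - by move=> n phi hp i j b; exact: (act_unit hC n phi hp i j b).
  - by move=> n m c phi psi bs hp hq hb i j b; exact: (act_linphi n m c phi psi bs hp hq hb i j b).
  - by move=> n m c phi b1 b2 hp h1 h2 i j b; exact: (act_linbs n m c phi b1 b2 hp h1 h2 i j b).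
  - by move=> n phi hp; exact: (dv_ghom hC hM n phi hp).
  - by move=> n c phi psi hp hq i j b; exact: (dv_lin hC hM n c phi psi hp hq i j b).
  - by move=> n phi hp i j b; exact: (dv_sq hC hM n phi hp i j b).
  - by move=> n m phi bs hp hb i j b; exact: (dv_leibniz hC hM n m phi bs hp hb i j b).
move=> M M' M'' dM dM' dM'' hM hM' hM''; split.
- move=> n f hf hcf; split.
  + by move=> a phi hp; exact: (vee_ghom hC hf a phi hp).
  + by move=> a c phi psi hp hq i j b; exact: (vee_lin hC hf a c phi psi hp hq i j b).
  + by move=> a m phi bs hp hb i j b; exact: (vee_act hC hf a m phi bs hp hb i j b).
- by move=> n1 n2 f g hf hcf hg hcg a phi hp i j b; exact: (vee_comp hC hf hcf hg a phi hp i j b).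
- by move=> a phi hp i j b; exact: (vee_id hC a phi hp i j b).
- by move=> n f hf hcf a phi hp i j b; exact: (vee_tdiff hC hM hM' hf hcf a phi hp i j b).
- by move=> n c f g hf hcf hg hcg a phi hp i j b; exact: (vee_tmlin hC n c f g hf hg a phi hp i j b).
Qed.
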